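(* Let $\phi_1,\dots,\phi_{n+m}$ be arbitrary functions of one variable and $\bar\beta=\{\beta_1,\dots,\beta_{n+m}\}$. Define $\Phi_{n+m}(\bar\beta)=\Delta_{n+m}(\bar\beta)\det_{n+m}\big[\phi_k(\beta_j)\big]_{j,k=1}^{n+m}$. Then $$\Phi_{n+m}(\bar\beta)=\sum \Delta_n(\bar\beta_{\rm I})\det_{k=1,\dots,n}\phi_k(\beta_{{\rm I}_j})\cdot\Delta_m(\bar\beta_{\rm II})\det_{k=1,\dots,m}\phi_{n+k}(\beta_{{\rm II}_j})\cdot g(\bar\beta_{\rm II},\bar\beta_{\rm I}),$$ where the sum runs over partitions $\bar\beta\Rightarrow\{\bar\beta_{\rm I},\bar\beta_{\rm II}\}$ with $\#\bar\beta_{\rm I}=n$, $\#\bar\beta_{\rm II}=m$, the elements of each subset being listed in increasing order of their original indices ($\beta_{{\rm I}_1},\beta_{{\rm I}_2},\dots$ and $\beta_{{\rm II}_1},\dots$).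
   Context: Fix $c\neq0$ and $g(u,v)=\frac{c}{u-v}$. For sets, $g(\bar u,\bar v)=\prod_{u_j\in\bar u}\prod_{v_k\in\bar v}g(u_j,v_k)$. For an ordered set $\bar v=\{v_1,\dots,v_p\}$, $\Delta_p(\bar v)=\prod_{j>k}g(v_j,v_k)$ (with $\Delta_0=1$). *)

(* Defs.v *)
From HB Require Import structures.
From mathcomp Require Import all_boot all_order all_algebra.
Set Implicit Arguments. Unset Strict Implicit. Unset Printing Implicit Defensive.
Import GRing.Theory.
Local Open Scope ring_scope.

Definition gfun {R : fieldType} (c u v : R) : R := c / (u - v).

Definition gset {R : fieldType} (c : R) (s t : seq R) : R :=
  \prod_(u <- s) \prod_(v <- t) gfun c u v.

Definition Delta {R : fieldType} (c : R) (s : seq R) : R :=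
  \prod_(j < size s) \prod_(k < size s | (k < j)%N) gfun c (nth 0 s j) (nth 0 s k).

(* Main.v *)
Require Import Defs.
From mathcomp Require Import all_boot all_order all_algebra all_fingroup.
From mathcomp Require Import ring.
From Stdlib Require Import FunctionalExtensionality.
Set Implicit Arguments. Unset Strict Implicit. Unset Printing Implicit Defensive.
Import GRing.Theory.
Local Open Scope ring_scope.

Definition DF (R : fieldType) (c : R) p (a : 'I_p -> R) : R :=
  \prod_(j < p) \prod_(k < p | (k < j)%N) gfun c (a j) (a k).

Definition VV (R : fieldType) p (a : 'I_p -> R) : R :=
  \prod_(i < p) \prod_(j < p | (i < j)%N) (a j - a i).

Definition CC (R : fieldType) (c : R) p : R :=
  \prod_(i < p) \prod_(j < p | (i < j)%N) c.

Lemma DF_VV (R : fieldType) (c : R) p (a : 'I_p -> R) :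
  DF c a = CC c p * (VV a)^-1.
Proof.
rewrite /DF /CC /VV.
rewrite (exchange_big_dep predT) //=.
rewrite -prodfV -big_split /=; apply: eq_bigr => k _.
rewrite -prodfV -big_split /=; apply: eq_bigr => j _.
by rewrite /gfun.
Qed.

Lemma VV_perm (R : fieldType) p (a : 'I_p -> R) (s : 'S_p) :
  VV (fun i => a (s i)) = (-1) ^+ s * VV a.
Proof.
have E : forall (b : 'I_p -> R), VV b = \det (Vandermonde p (\row_i b i)).
  by move=> b; rewrite det_Vandermonde /VV; apply: eq_bigr => i _; apply: eq_bigr => j _; rewrite !mxE.
rewrite !E.
have -> : Vandermonde p (\row_i a (s i)) = col_perm s (Vandermonde p (\row_i a i)).
  by apply/matrixP => i j; rewrite !mxE.
by rewrite col_permE det_mulmx det_perm odd_permV mulrC.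
Qed.

Lemma DF_perm (R : fieldType) (c : R) p (a : 'I_p -> R) (s : 'S_p) :
  DF c (fun i => a (s i)) = (-1) ^+ s * DF c a.
Proof. by rewrite !DF_VV VV_perm invr_signM mulrCA. Qed.

Lemma lemA (R : fieldType) (c : R) p (a : 'I_p -> R) (psi : 'I_p -> R -> R) :
  DF c a * \det (\matrix_(j < p, k < p) psi k (a j)) =
  \sum_(s : 'S_p) DF c (fun i => a (s i)) * \prod_(k < p) psi k (a (s k)).
Proof.
rewrite /determinant big_distrr /=.
rewrite [RHS](reindex_inj invg_inj) /=.
apply: eq_bigr => s _.
rewrite DF_perm odd_permV mulrA (mulrC (DF c a)); congr (_ * _).
rewrite (reindex_perm s^-1%g); apply: eq_bigr => k _.
by rewrite mxE permKV.
Qed.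
Definition GG (R : fieldType) (c : R) m n (z : 'I_m -> R) (y : 'I_n -> R) : R :=
  \prod_(k < m) \prod_(j < n) gfun c (z k) (y j).

Lemma DF_split (R : fieldType) (c : R) n m (b : 'I_(n + m) -> R) :
  DF c b = DF c (fun j => b (lshift m j)) * DF c (fun k => b (rshift n k)) *
           GG c (fun k => b (rshift n k)) (fun j => b (lshift m j)).
Proof.
rewrite /DF /GG big_split_ord /=.
have -> : \prod_(i < n) \prod_(k < n + m | (k < lshift m i)%N)
      gfun c (b (lshift m i)) (b k) =
    \prod_(j < n) \prod_(k < n | (k < j)%N) gfun c (b (lshift m j)) (b (lshift m k)).
  apply: eq_bigr => j _; rewrite big_split_ord /= [X in _ * X]big1 ?mulr1 //.
  move=> k /= h; exfalso; have := ltn_ord j; rewrite ltnNge => /negP; apply.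
  by apply: ltnW; apply: leq_ltn_trans h; apply: leq_addr.
have -> : \prod_(i < m) \prod_(k < n + m | (k < rshift n i)%N)
      gfun c (b (rshift n i)) (b k) =
    \prod_(j < m) (\prod_(k < n) gfun c (b (rshift n j)) (b (lshift m k)) *
      \prod_(k < m | (k < j)%N) gfun c (b (rshift n j)) (b (rshift n k))).
  apply: eq_bigr => j _; rewrite big_split_ord /=; congr (_ * _).
    by apply: eq_bigl => k; rewrite (leq_trans (ltn_ord k)) // leq_addr.
  by apply: eq_bigl => k; rewrite ltn_add2l.
by rewrite big_split /= -mulrA [X in _ * X = _]mulrC.
Qed.
Definition ee N p (I : {set 'I_N}) (h : #|I| = p) (j : 'I_p) : 'I_N :=
  enum_val (cast_ord (esym h) j).

Lemma ee_in N p (I : {set 'I_N}) (h : #|I| = p) j : ee h j \in I.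
Proof. exact: enum_valP. Qed.

Lemma ee_inj N p (I : {set 'I_N}) (h : #|I| = p) : injective (ee h).
Proof. by move=> j j' /enum_val_inj /cast_ord_inj. Qed.

Definition mkf n m (I : {set 'I_(n + m)}) (hI : #|I| = n) (hC : #|~: I| = m)
  (t1 : 'S_n) (t2 : 'S_m) (i : 'I_(n + m)) : 'I_(n + m) :=
  match split i with inl j => ee hI (t1 j) | inr k => ee hC (t2 k) end.

Lemma mkf_inj n m (I : {set 'I_(n + m)}) (hI : #|I| = n) (hC : #|~: I| = m) t1 t2 :
  injective (mkf hI hC t1 t2).
Proof.
move=> i i'; rewrite /mkf.
case: split_ordP => j ->; case: split_ordP => j' -> E.
- by rewrite (perm_inj (ee_inj E)).
- by have := ee_in hC (t2 j'); rewrite in_setC -E ee_in.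
- by have := ee_in hC (t2 j); rewrite in_setC E ee_in.
- by rewrite (perm_inj (ee_inj E)).
Qed.

Definition mk n m (I : {set 'I_(n + m)}) (hI : #|I| = n) (hC : #|~: I| = m)
  (t1 : 'S_n) (t2 : 'S_m) : 'S_(n + m) := perm (@mkf_inj n m I hI hC t1 t2).

Lemma mkL n m I hI hC t1 t2 j :
  @mk n m I hI hC t1 t2 (lshift m j) = ee hI (t1 j).
Proof. by rewrite permE /mkf (unsplitK (inl _ j)). Qed.

Lemma mkR n m I hI hC t1 t2 k :
  @mk n m I hI hC t1 t2 (rshift n k) = ee hC (t2 k).
Proof. by rewrite permE /mkf (unsplitK (inr _ k)). Qed.

Definition Iset n m (s : 'S_(n + m)) : {set 'I_(n + m)} :=
  [set s (lshift m j) | j : 'I_n].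

Lemma card_Iset n m (s : 'S_(n + m)) : #|Iset s| = n.
Proof.
rewrite /Iset card_imset ?card_ord //.
by move=> j j' /perm_inj /lshift_inj.
Qed.

Lemma bij n m (I : {set 'I_(n + m)}) (hI : #|I| = n) (hC : #|~: I| = m)
  (R : fieldType) (F : 'S_(n + m) -> R) :
  \sum_(s : 'S_(n + m) | Iset s == I) F s =
  \sum_(t1 : 'S_n) \sum_(t2 : 'S_m) F (mk hI hC t1 t2).
Proof.
rewrite pair_big /=.
have mkinj : {in [set: 'S_n * 'S_m] &, injective (fun p => mk hI hC p.1 p.2)}.
  move=> [a1 a2] [b1 b2] _ _ /= E; congr (_, _); apply/permP => j.
    by have := congr1 (fun s : 'S_(n + m) => s (lshift m j)) E; rewrite /= !mkL => /ee_inj.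
  by have := congr1 (fun s : 'S_(n + m) => s (rshift n j)) E; rewrite /= !mkR => /ee_inj.
transitivity (\sum_(s in (fun p => mk hI hC p.1 p.2) @: [set: 'S_n * 'S_m]) F s).
  apply: eq_bigl => s; apply/eqP/imsetP.
  - move=> Es.
    have inL j : s (lshift m j) \in I by rewrite -Es; apply: imset_f.
    have inR k : s (rshift n k) \in ~: I.
      rewrite -Es in_setC; apply/imsetP => -[j _ /perm_inj E].
      by move/eqP: E; rewrite eq_rlshift.
    pose g1 j := cast_ord hI (enum_rank_in (inL j) (s (lshift m j))).
    pose g2 k := cast_ord hC (enum_rank_in (inR k) (s (rshift n k))).
    have eg1 j : ee hI (g1 j) = s (lshift m j).
      by rewrite /ee /g1 cast_ordK enum_rankK_in.
    have eg2 k : ee hC (g2 k) = s (rshift n k).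
      by rewrite /ee /g2 cast_ordK enum_rankK_in.
    have g1inj : injective g1.
      by move=> j j' E; apply: lshift_inj; apply: (@perm_inj _ s); rewrite -!eg1 E.
    have g2inj : injective g2.
      by move=> j j' E; apply: rshift_inj; apply: (@perm_inj _ s); rewrite -!eg2 E.
    exists (perm g1inj, perm g2inj); first by rewrite in_setT.
    apply/permP => i /=; case: (split_ordP i) => j ->.
      by rewrite mkL permE eg1.
    by rewrite mkR permE eg2.
  - move=> [[t1 t2] _ ->] /=; apply/eqP; rewrite eqEcard card_Iset hI leqnn andbT.
    by apply/subsetP => x /imsetP [j _ ->]; rewrite mkL ee_in.
rewrite big_imset //=; apply: eq_bigl => p; by rewrite in_setT.
Qed.

Lemma nth_map_ord (R : fieldType) p (a : 'I_p -> R) (j : 'I_p) :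
  nth 0 [seq a i | i <- enum 'I_p] j = a j.
Proof. by rewrite (nth_map j) ?size_enum_ord // nth_ord_enum. Qed.

Lemma DeltaE (R : fieldType) (c : R) p (a : 'I_p -> R) :
  Delta c [seq a i | i <- enum 'I_p] = DF c a.
Proof.
rewrite /Delta /DF size_map size_enum_ord.
by apply: eq_bigr => j _; apply: eq_bigr => k _; rewrite !nth_map_ord.
Qed.

Lemma enumE N p (I : {set 'I_N}) (h : #|I| = p) :
  enum I = [seq ee h j | j <- enum 'I_p].
Proof.
apply: (inj_map val_inj); apply: (@eq_from_nth _ 0%N) => [|i Hi].
  by rewrite !size_map -cardE h -enumT size_enum_ord.
have Hip : (i < p)%N by move: Hi; rewrite size_map -cardE h.
have Hi2 : (i < size (enum I))%N by rewrite -cardE h.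
rewrite (nth_map (ee h (Ordinal Hip))) // (nth_map (ee h (Ordinal Hip))) ?size_map ?size_enum_ord //.
rewrite (nth_map (Ordinal Hip)) ?size_enum_ord //.
2: by rewrite -enumT size_enum_ord.
rewrite /ee /enum_val.
have E : nth (Ordinal Hip) (enum 'I_p) i = Ordinal Hip.
  by apply: val_inj; rewrite /= nth_enum_ord.
rewrite E /=; congr val; exact: set_nth_default.
Qed.

Lemma gsetE (R : fieldType) (c : R) m n (z : 'I_m -> R) (y : 'I_n -> R) :
  gset c [seq z i | i <- enum 'I_m] [seq y i | i <- enum 'I_n] = GG c z y.
Proof.
rewrite /gset /GG big_map big_enum /=; apply: eq_bigr => k _.
by rewrite big_map big_enum.
Qed.

Lemma GG_perm (R : fieldType) (c : R) m n (z : 'I_m -> R) (y : 'I_n -> R) (s1 : 'S_n) (s2 : 'S_m) :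
  GG c (fun k => z (s2 k)) (fun j => y (s1 j)) = GG c z y.
Proof.
rewrite /GG (reindex_perm s2^-1%g) /=; apply: eq_bigr => k _.
rewrite (reindex_perm s1^-1%g) /= permKV; apply: eq_bigr => j _.
by rewrite permKV.
Qed.

Lemma lemB (R : fieldType) (c : R) p (a : 'I_p -> R) (psi : 'I_p -> R -> R) :
  Delta c [seq a i | i <- enum 'I_p] *
    \det (\matrix_(j < p, k < p) psi k (nth 0 [seq a i | i <- enum 'I_p] j)) =
  \sum_(s : 'S_p) DF c (fun i => a (s i)) * \prod_(k < p) psi k (a (s k)).
Proof.
rewrite DeltaE -lemA; congr (_ * \det _).
by apply/matrixP => j k; rewrite !mxE nth_map_ord.
Qed.

Definition HH (R : fieldType) (c : R) n m (phi : 'I_(n + m) -> R -> R)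
  (y : 'I_n -> R) (z : 'I_m -> R) : R :=
  DF c y * DF c z * GG c z y * \prod_(k < n) phi (lshift m k) (y k) *
  \prod_(k < m) phi (rshift n k) (z k).

Theorem lemmaC2 (R : fieldType) (c : R) (hc : c != 0) (n m : nat)
  (phi : 'I_(n + m) -> R -> R) (beta : 'I_(n + m) -> R)
  (hbeta : injective beta) :
  Delta c [seq beta i | i <- enum 'I_(n + m)] *
    \det (\matrix_(j < n + m, k < n + m) phi k (beta j))
  = \sum_(I : {set 'I_(n + m)} | #|I| == n)
      (Delta c [seq beta i | i <- enum I] *
         \det (\matrix_(j < n, k < n)
                 phi (lshift m k) (nth 0 [seq beta i | i <- enum I] j)) *
       (Delta c [seq beta i | i <- enum (~: I)] *
         \det (\matrix_(j < m, k < m)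
                 phi (rshift n k) (nth 0 [seq beta i | i <- enum (~: I)] j))) *
       gset c [seq beta i | i <- enum (~: I)] [seq beta i | i <- enum I]).
Proof.
rewrite DeltaE lemA.
transitivity (\sum_(s : 'S_(n + m))
   HH c phi (fun j => beta (s (lshift m j))) (fun k => beta (s (rshift n k)))).
  apply: eq_bigr => s _; rewrite DF_split big_split_ord /HH /=.
  by rewrite !mulrA.
rewrite (partition_big (fun s => Iset s) (fun I => #|I| == n)); last first.
  by move=> s _; rewrite card_Iset.
apply: eq_bigr => I /eqP hI.
have hC : #|~: I| = m by apply/(@addnI n); rewrite -{1}hI cardsC card_ord.
rewrite (eq_bigl (fun s => Iset s == I)) // (bij hI hC).
have E1 : [seq beta i | i <- enum I] = [seq beta (ee hI j) | j <- enum 'I_n].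
  by rewrite (enumE hI) -map_comp.
have E2 : [seq beta i | i <- enum (~: I)] = [seq beta (ee hC j) | j <- enum 'I_m].
  by rewrite (enumE hC) -map_comp.
rewrite E1 E2 (lemB c (fun j => beta (ee hI j)) (fun k => phi (lshift m k))) (lemB c (fun j => beta (ee hC j)) (fun k => phi (rshift n k))) gsetE.
rewrite -mulrA big_distrl /=; apply: eq_bigr => t1 _.
rewrite big_distrl big_distrr /=; apply: eq_bigr => t2 _.
rewrite -(GG_perm c _ _ t1 t2) /HH /=.
have -> : (fun j => beta (mk hI hC t1 t2 (lshift m j))) = (fun j => beta (ee hI (t1 j))).
  by apply: functional_extensionality => j; rewrite mkL.
have -> : (fun k => beta (mk hI hC t1 t2 (rshift n k))) = (fun k => beta (ee hC (t2 k))).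
  by apply: functional_extensionality => k; rewrite mkR.
rewrite /=.
under eq_bigr do rewrite mkL.
under [\prod_(k < m) _]eq_bigr do rewrite mkR.
set A := DF c _; set B := DF c _; set G := GG c _ _; set P := \prod_(k < n) _; set Q := \prod_(k < m) _.
rewrite -!mulrA; congr (A * _); rewrite [RHS]mulrCA; congr (B * _); by rewrite mulrCA (mulrC G Q).
Qed.
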